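(* Let $\Omega$ be a non-empty list of atoms and let $A,B$ be formulas with frontier $\Omega$. Whenever the joins in question exist, $A\vee_\Omega B=\varphi(\psi(A)\sqcup_\Omega\psi(B))$ and $\bot_\Omega=\varphi(0_\Omega)$, where $\vee_\Omega$ and $\bot_\Omega$ denote binary join and least element in $\mathrm{Frm}_\Omega$, and $\sqcup_\Omega$ and $0_\Omega$ denote binary join and least element in $\mathrm{Ctx}_\Omega$.
   Context: Formulas are built from atoms ($p,q,\dots$) by a binary product: every formula is an atom or $A\bullet B$. A context is a finite (possibly empty) list of formulas; commas denote concatenation. The frontier $\mathrm{fr}$ is the ordered list of atom occurrences ($\mathrm{fr}(p)=p$, $\mathrm{fr}(A\bullet B)=\mathrm{fr}(A),\mathrm{fr}(B)$; for contexts, concatenate). The sequent calculus has exactly four rules (no weakening, contraction or exchange): ($\bullet L$) from $A,B,\Delta\vdash C$ infer $A\bullet B,\Delta\vdash C$ (the product must be leftmost); ($\bullet R$) from $\Gamma\vdash A$ and $\Delta\vdash B$ infer $\Gamma,\Delta\vdash A\bullet B$; ($id$) $A\vdash A$; ($cut$) from $\Theta\vdash A$ and $\Gamma,A,\Delta\vdash B$ infer $\Gamma,\Theta,\Delta\vdash B$; derivable means conclusion of a finite derivation tree with no undischarged premises. The Tamari order on formulas is the least preorder with $(A\bullet B)\bullet C\le A\bullet(B\bullet C)$ and $A_1\le A_2$, $B_1\le B_2$ implying $A_1\bullet B_1\le A_2\bullet B_2$. The substitution order on contexts is the least relation $\le$ such that (1) $\Gamma\vdash A$ derivable implies $\Gamma\le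 A$ (one-element context); (2) $\cdot\le\cdot$; (3) $\Gamma_1\le\Gamma_2$ and $\Theta_1\le\Theta_2$ imply $(\Gamma_1,\Theta_1)\le(\Gamma_2,\Theta_2)$. $\mathrm{Frm}_\Omega$ is the poset of formulas with frontier $\Omega$ under the Tamari order; $\mathrm{Ctx}_\Omega$ is the poset of contexts with frontier $\Omega$ under the substitution order. $\varphi(A)=A$, $\varphi(\Gamma,A)=\varphi(\Gamma)\bullet A$ (left-associated product of a non-empty context); $\psi(p)=p$, $\psi(A\bullet B)=\psi(A),B$. *)

(* Defs.v *)
From Stdlib Require Import List.
Import ListNotations.

Inductive form : Type :=
| Atom : nat -> form
| Prod : form -> form -> form.

(* Contexts are finite lists of formulas; commas = list concatenation. *)
Definition ctx := list form.

Fixpoint fr (A : form) : list nat :=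
  match A with
  | Atom p => [p]
  | Prod A B => fr A ++ fr B
  end.

Definition frc (G : ctx) : list nat := flat_map fr G.

Inductive deriv : ctx -> form -> Prop :=
| d_prodL : forall A B D C, deriv (A :: B :: D) C -> deriv (Prod A B :: D) C
| d_prodR : forall G D A B, deriv G A -> deriv D B -> deriv (G ++ D) (Prod A B)
| d_id : forall A, deriv [A] A
| d_cut : forall Th A G D B,
    deriv Th A -> deriv (G ++ A :: D) B -> deriv (G ++ Th ++ D) B.

Inductive tam : form -> form -> Prop :=
| tam_refl : forall A, tam A A
| tam_trans : forall A B C, tam A B -> tam B C -> tam A C
| tam_assoc : forall A B C, tam (Prod (Prod A B) C) (Prod A (Prod B C))
| tam_mono : forall A1 A2 B1 B2, tam A1 A2 -> tam B1 B2 -> tam (Prod A1 B1) (Prod A2 B2).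

Inductive subst_le : ctx -> ctx -> Prop :=
| sl_deriv : forall G A, deriv G A -> subst_le G [A]
| sl_nil : subst_le [] []
| sl_app : forall G1 G2 T1 T2,
    subst_le G1 G2 -> subst_le T1 T2 -> subst_le (G1 ++ T1) (G2 ++ T2).

(* phi: left-associated product of a non-empty context.
   On the empty context it returns an (irrelevant) junk value; in the
   statement it is only applied to contexts with non-empty frontier. *)
Definition phi (G : ctx) : form :=
  match G with
  | [] => Atom 0
  | A :: G' => fold_left Prod G' A
  end.

Fixpoint psi (A : form) : ctx :=
  match A with
  | Atom p => [Atom p]
  | Prod A B => psi A ++ [B]
  end.

Definition is_join {T : Type} (le : T -> T -> Prop) (P : T -> Prop) (j a b : T) : Prop :=
  P j /\ le a j /\ le b j /\ (forall c, P c -> le a c -> le b c -> le j c).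

Definition is_least {T : Type} (le : T -> T -> Prop) (P : T -> Prop) (j : T) : Prop :=
  P j /\ (forall c, P c -> le j c).

Definition in_Frm (Om : list nat) (A : form) : Prop := fr A = Om.
Definition in_Ctx (Om : list nat) (G : ctx) : Prop := frc G = Om.

(* Main.v *)
Require Import Defs.
From Stdlib Require Import List Lia.
Import ListNotations.

Fixpoint sz (A : form) : nat := match A with Atom _ => 1 | Prod A B => sz A + sz B end.
Fixpoint wt (A : form) : nat := match A with Atom _ => 0 | Prod A B => wt A + wt B + sz B end.

Lemma sz_pos A : 1 <= sz A.
Proof. induction A; simpl; lia. Qed.

Lemma tam_sz A B : tam A B -> sz A = sz B.
Proof. induction 1; simpl; lia. Qed.

Lemma tam_wt A B : tam A B -> A = B \/ wt A < wt B.
Proof.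
  induction 1.
  - auto.
  - destruct IHtam1 as [->|]; destruct IHtam2 as [->|]; auto; right; lia.
  - right; simpl; pose proof (sz_pos C); lia.
  - pose proof (tam_sz _ _ H0).
    destruct IHtam1 as [->|]; destruct IHtam2 as [->|]; auto; right; simpl; lia.
Qed.

Lemma tam_antisym A B : tam A B -> tam B A -> A = B.
Proof.
  intros H1 H2; destruct (tam_wt _ _ H1) as [|]; auto.
  destruct (tam_wt _ _ H2) as [->|]; auto; lia.
Qed.

Lemma fl_mono L : forall x y, tam x y -> tam (fold_left Prod L x) (fold_left Prod L y).
Proof.
  induction L; intros; simpl; auto.
  apply IHL; apply tam_mono; auto using tam_refl.
Qed.

Lemma phi_snoc L b : L <> [] -> phi (L ++ [b]) = Prod (phi L) b.
Proof.
  destruct L as [|a L]; [congruence|]; intros _; simpl.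
  rewrite fold_left_app; reflexivity.
Qed.

Lemma fl_split L : forall x, L <> [] -> tam (fold_left Prod L x) (Prod x (phi L)).
Proof.
  induction L using rev_ind; intros y Hne; [congruence|].
  rewrite fold_left_app; simpl.
  destruct L as [|a L'].
  - simpl. apply tam_refl.
  - rewrite phi_snoc by congruence.
    eapply tam_trans; [apply tam_mono; [apply IHL; congruence|apply tam_refl]|].
    apply tam_assoc.
Qed.

Lemma deriv_ne G A : deriv G A -> G <> [].
Proof.
  induction 1; try congruence.
  - destruct G; simpl; congruence.
  - destruct G; simpl; [destruct Th; simpl; congruence|congruence].
Qed.

Lemma phi_app_cons g G D : phi ((g :: G) ++ D) = fold_left Prod D (phi (g :: G)).
Proof. simpl. rewrite fold_left_app. reflexivity. Qed.

Lemma deriv_tam G A : deriv G A -> tam (phi G) A.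
Proof.
  induction 1.
  - exact IHderiv.
  - pose proof (deriv_ne _ _ H) as HG; pose proof (deriv_ne _ _ H0) as HD.
    destruct G as [|g G]; [congruence|].
    rewrite phi_app_cons.
    eapply tam_trans; [apply fl_split; auto|].
    apply tam_mono; auto.
  - apply tam_refl.
  - pose proof (deriv_ne _ _ H) as HT.
    eapply tam_trans; [|exact IHderiv2].
    destruct Th as [|t Th]; [congruence|].
    destruct G as [|g G].
    + simpl. rewrite fold_left_app. apply fl_mono. exact IHderiv1.
    + rewrite !phi_app_cons. simpl. rewrite fold_left_app.
      apply fl_mono.
      eapply tam_trans; [apply (fl_split (t :: Th)); congruence|].
      apply tam_mono; [apply tam_refl|exact IHderiv1].
Qed.

Inductive sl2 : ctx -> ctx -> Prop :=
| s2nil : sl2 [] []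
| s2cons : forall G1 A G2 D, deriv G1 A -> sl2 G2 D -> sl2 (G1 ++ G2) (A :: D).

Lemma sl2_app G1 D1 G2 D2 : sl2 G1 D1 -> sl2 G2 D2 -> sl2 (G1 ++ G2) (D1 ++ D2).
Proof.
  induction 1; intros; simpl; auto.
  rewrite <- app_assoc. constructor; auto.
Qed.

Lemma sl_to_sl2 G D : subst_le G D -> sl2 G D.
Proof.
  induction 1.
  - rewrite <- (app_nil_r G). constructor; auto. constructor.
  - constructor.
  - apply sl2_app; auto.
Qed.

Lemma sl2_to_sl G D : sl2 G D -> subst_le G D.
Proof.
  induction 1.
  - constructor.
  - change (A :: D) with ([A] ++ D). constructor; auto. constructor; auto.
Qed.

Lemma sl2_split G X Y : sl2 G (X ++ Y) ->
  exists G1 G2, G = G1 ++ G2 /\ sl2 G1 X /\ sl2 G2 Y.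
Proof.
  revert G; induction X; intros G H; simpl in *.
  - exists [], G; repeat split; auto; constructor.
  - inversion H; subst.
    destruct (IHX _ H4) as (H1 & H2 & -> & HX & HY).
    exists (G1 ++ H1), H2; repeat split; auto.
    + apply app_assoc.
    + constructor; auto.
Qed.

Lemma sl2_cut G1 D1 : sl2 G1 D1 -> forall P A, deriv (P ++ D1) A -> deriv (P ++ G1) A.
Proof.
  induction 1; intros P B HB; auto.
  pose proof (d_cut _ _ _ _ _ H HB) as HC.
  rewrite app_assoc in HC. apply IHsl2 in HC. rewrite <- app_assoc in HC. exact HC.
Qed.

Lemma sl2_trans D E : sl2 D E -> forall G, sl2 G D -> sl2 G E.
Proof.
  induction 1; intros G HG; auto.
  destruct (sl2_split _ _ _ HG) as (H1 & H2 & -> & HX & HY).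
  constructor; auto.
  apply (sl2_cut _ _ HX [] A). exact H.
Qed.

Lemma sl_trans G D E : subst_le G D -> subst_le D E -> subst_le G E.
Proof.
  intros H1 H2. apply sl2_to_sl.
  apply (sl2_trans D E); apply sl_to_sl2; auto.
Qed.

Lemma sl_refl G : subst_le G G.
Proof.
  induction G; [constructor|].
  change (a :: G) with ([a] ++ G). constructor; auto. constructor. constructor.
Qed.

Lemma tam_deriv A B : tam A B -> deriv [A] B.
Proof.
  induction 1.
  - constructor.
  - apply (d_cut [A] B [] [] C); auto.
  - do 2 apply d_prodL.
    change [A; B; C] with ([A] ++ ([B] ++ [C])).
    repeat constructor.
  - apply d_prodL. change [A1; B1] with ([A1] ++ [B1]). constructor; auto.
Qed.

Lemma psi_mono A B : tam A B -> subst_le (psi A) (psi B).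
Proof.
  induction 1; simpl.
  - apply sl_refl.
  - eapply sl_trans; eauto.
  - rewrite <- app_assoc. constructor; [apply sl_refl|].
    constructor. change [B; C] with ([B] ++ [C]). repeat constructor.
  - constructor; auto. constructor. apply tam_deriv; auto.
Qed.

Lemma sl2_fl G D : sl2 G D -> forall x y, tam x y ->
  tam (fold_left Prod G x) (fold_left Prod D y).
Proof.
  induction 1; intros x y Hxy; simpl; auto.
  rewrite fold_left_app. apply IHsl2.
  pose proof (deriv_ne _ _ H).
  eapply tam_trans; [apply fl_split; auto|].
  apply tam_mono; auto. apply deriv_tam; auto.
Qed.

Lemma phi_mono G D : subst_le G D -> tam (phi G) (phi D).
Proof.
  intro H; apply sl_to_sl2 in H. inversion H; subst.
  - apply tam_refl.
  - pose proof (deriv_ne _ _ H0).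
    destruct G1 as [|g G1]; [congruence|].
    rewrite phi_app_cons. simpl.
    apply sl2_fl; auto. exact (deriv_tam _ _ H0).
Qed.

Lemma psi_ne A : psi A <> [].
Proof. destruct A; simpl; [congruence|]. intro H; apply app_eq_nil in H; destruct H; congruence. Qed.

Lemma phi_psi A : phi (psi A) = A.
Proof.
  induction A; simpl; auto.
  rewrite phi_snoc by apply psi_ne. rewrite IHA1; auto.
Qed.

Lemma frc_app a b : frc (a ++ b) = frc a ++ frc b.
Proof. unfold frc. apply flat_map_app. Qed.

Lemma frc_psi A : frc (psi A) = fr A.
Proof.
  induction A; simpl; auto.
  rewrite frc_app, IHA1. unfold frc; simpl. rewrite app_nil_r; auto.
Qed.

Lemma fr_fl L : forall x, fr (fold_left Prod L x) = fr x ++ frc L.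
Proof.
  induction L; intros; simpl. rewrite app_nil_r; auto.
  rewrite IHL. simpl. rewrite app_assoc. auto.
Qed.

Lemma fr_phi G : G <> [] -> fr (phi G) = frc G.
Proof. destruct G; [congruence|]. intros _. simpl. apply fr_fl. Qed.

Theorem lemma2p9 (Om : list nat) (A B : form) :
  Om <> [] -> fr A = Om -> fr B = Om ->
  (forall (J : form) (G : ctx),
      is_join tam (in_Frm Om) J A B ->
      is_join subst_le (in_Ctx Om) G (psi A) (psi B) ->
      J = phi G) /\
  (forall (J : form) (G : ctx),
      is_least tam (in_Frm Om) J ->
      is_least subst_le (in_Ctx Om) G ->
      J = phi G).
Proof.
  intros Hne HA HB. split.
  - intros J G (HJ & HAJ & HBJ & HJl) (HG & HAG & HBG & HGl).
    assert (HGne : G <> []) by (intro; subst; unfold in_Ctx in HG; simpl in HG; congruence).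
    assert (HphiG : in_Frm Om (phi G)) by (unfold in_Frm; rewrite fr_phi; auto).
    apply tam_antisym.
    + apply HJl; auto.
      * rewrite <- (phi_psi A). apply phi_mono; auto.
      * rewrite <- (phi_psi B). apply phi_mono; auto.
    + rewrite <- (phi_psi J). apply phi_mono. apply HGl.
      * unfold in_Ctx; rewrite frc_psi; auto.
      * apply psi_mono; auto.
      * apply psi_mono; auto.
  - intros J G (HJ & HJl) (HG & HGl).
    assert (HGne : G <> []) by (intro; subst; unfold in_Ctx in HG; simpl in HG; congruence).
    apply tam_antisym.
    + apply HJl. unfold in_Frm; rewrite fr_phi; auto.
    + rewrite <- (phi_psi J). apply phi_mono. apply HGl.
      unfold in_Ctx; rewrite frc_psi; auto.
Qed.
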